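(* Let $G=(V,E)$ be a $d$-regular hypergraph and $k$ an integer. Then $\mathrm{DkSH}_d(G,k)\le\mathrm{MCDSH}_d(G,k)/p$, where $p=d!/d^d$.
   Context: A $d$-regular hypergraph has all hyperedges of size exactly $d$. For $S\subseteq V$, $E(S)=\{e\in E:e\subseteq S\}$; for $\phi:S\to[d]$, $E_\phi(S)=\{e\in E:e=\{v_1,\dots,v_d\}\subseteq S,\ \phi(v_i)\ne\phi(v_j)\ \forall i\ne j\}$. $\mathrm{DkSH}_d(G,k)$ is the maximum of $|E(S)|$ over $S\subseteq V$ with $|S|\le k$ (optimal value of Densest-$k$-Subhypergraph), and $\mathrm{MCDSH}_d(G,k)$ is the maximum of $|E_\phi(S)|$ over $S\subseteq V$ with $|S|\le k$ and $\phi:S\to[d]$. *)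

(* Defs.v *)
From mathcomp Require Import all_boot all_order all_algebra.
Set Implicit Arguments. Unset Strict Implicit. Unset Printing Implicit Defensive.

(* A hypergraph on a finite vertex type V is a set of hyperedges E : {set {set V}}.
   It is d-regular (d-uniform) when every hyperedge has exactly d vertices. *)
Definition uniform_hg (V : finType) (d : nat) (E : {set {set V}}) : Prop :=
  forall e, e \in E -> #|e| = d.

Definition edges_in (V : finType) (E : {set {set V}}) (S : {set V}) : {set {set V}} :=
  [set e in E | e \subset S].

(* Colourings phi : S -> [d] = {1,..,d} are encoded as finite functions
   V -> 'I_d.+1 whose values on S lie in 1..d (values outside S are irrelevant). *)
Definition is_coloring (V : finType) (d : nat) (S : {set V}) (phi : {ffun V -> 'I_d.+1}) : bool :=
  [forall v in S, 0 < phi v].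

Definition colorful_edges_in (V : finType) (d : nat) (E : {set {set V}}) (S : {set V})
    (phi : {ffun V -> 'I_d.+1}) : {set {set V}} :=
  [set e in E | (e \subset S) && [forall u in e, forall v in e, (u != v) ==> (phi u != phi v)]].

Definition DkSH (V : finType) (E : {set {set V}}) (k : nat) : nat :=
  \max_(S : {set V} | #|S| <= k) #|edges_in E S|.

Definition MCDSH (V : finType) (d : nat) (E : {set {set V}}) (k : nat) : nat :=
  \max_(S : {set V} | #|S| <= k)
    \max_(phi : {ffun V -> 'I_d.+1} | is_coloring S phi) #|colorful_edges_in E S phi|.

(* Main.v *)
Require Import Defs.
Set Warnings "-notation-overridden -ambiguous-paths".
From mathcomp Require Import all_boot all_order all_algebra.
Set Warnings "-notation-overridden -ambiguous-paths".
Import GRing.Theory Num.Theory.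
Set Implicit Arguments. Unset Strict Implicit. Unset Printing Implicit Defensive.

Definition injon (V : finType) (d : nat) (e : {set V}) (psi : {ffun V -> 'I_d}) : bool :=
  [forall u in e, forall v in e, (u != v) ==> (psi u != psi v)].

Lemma count_agree (V : finType) (d : nat) (e : {set V})
  (g : {ffun {x : V | x \in e} -> 'I_d}) :
  #|[set psi : {ffun V -> 'I_d} | [forall x, psi (val x) == g x]]| = d ^ (#|V| - #|e|).
Proof.
pose F := fun v : V => (if (insub v : option {x : V | x \in e}) is Some x
                        then pred1 (g x) else predT) : pred 'I_d.
transitivity #|(family F : simpl_pred {ffun V -> 'I_d})|.
  apply: eq_card => psi; rewrite inE; apply/forallP/familyP => H x.
    rewrite /F /=; case: insubP => [y _ <-|_] //=; exact: H y.
  by have := H (val x); rewrite /F valK /=.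
rewrite card_family.
have -> : #|V| - #|e| = count (predC (mem e)) (enum V).
  rewrite -(cardsC e) addKn cardE.
  rewrite /enum_mem size_filter count_filter.
  by apply: eq_count => x; rewrite !inE andbT.
rewrite /image_mem.
elim: (enum V) => //= v s ->.
rewrite /F; case: insubP => [y ye _|ve] /=.
  by rewrite ye /= card1 mul1n add0n.
by rewrite ve /= add1n expnS cardT size_enum_ord.
Qed.

Lemma sum_bool_card (T : finType) (P : pred T) :
  \sum_(x : T) (P x : nat) = #|P|.
Proof.
rewrite -sum1_card [RHS]big_mkcond /=; apply: eq_bigr => x _.
by case: ifP => H; rewrite -[P x]/(x \in P) H.
Qed.

Lemma injon_sum (V : finType) (d : nat) (e : {set V}) (psi : {ffun V -> 'I_d}) :
  (injon e psi : nat) =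
  \sum_(g in [set g : {ffun {x : V | x \in e} -> 'I_d} | injectiveb g])
     ([forall x, psi (val x) == g x] : nat).
Proof.
case: (boolP (injon e psi)) => H.
  pose g0 := [ffun x : {x : V | x \in e} => psi (val x)].
  have g0I : g0 \in [set g : {ffun {x : V | x \in e} -> 'I_d} | injectiveb g].
    rewrite inE; apply/injectiveP => x y; rewrite !ffunE => Hxy.
    apply: val_inj; apply/eqP; move/eqP: Hxy; apply: contraTT => Hne.
    move/forallP: H => /(_ (val x)) /implyP /(_ (valP x)) /forallP /(_ (val y)).
    by move=> /implyP /(_ (valP y)) /implyP; apply.
  rewrite (bigD1 g0) //= big1 ?addn0.
    suff -> : [forall x, psi (val x) == g0 x] by [].
    by apply/forallP => x; rewrite ffunE.
  move=> g /andP[_ gne]; apply/eqP; rewrite eqb0; apply: contra gne => /forallP Hg.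
  by apply/eqP/ffunP => x; rewrite ffunE; apply/esym/eqP; apply: Hg.
rewrite big1 //= => g; rewrite inE => /injectiveP gI.
apply/eqP; rewrite eqb0; apply: contra H => /forallP Hg.
apply/forallP => u; apply/implyP => ue; apply/forallP => v; apply/implyP => ve.
apply/implyP => uv.
have := Hg (Sub u ue); have := Hg (Sub v ve); rewrite /= => /eqP -> /eqP ->.
apply: contra uv => /eqP /gI /(congr1 val) /= ->; done.
Qed.

Lemma count_inj (V : finType) (d : nat) (e : {set V}) : #|e| = d ->
  \sum_(psi : {ffun V -> 'I_d}) (injon e psi : nat) = d`! * d ^ (#|V| - d).
Proof.
move=> ed.
rewrite (eq_bigr _ (fun psi _ => injon_sum e psi)) exchange_big /=.
rewrite (eq_bigr (fun _ => d ^ (#|V| - d))).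
  rewrite sum_nat_const card_inj_ffuns card_ord card_sig.
  have -> : #|[pred x | x \in e]| = d by rewrite -ed; apply: eq_card.
  by rewrite ffactnn.
move=> g _; rewrite sum_bool_card; have := count_agree g; rewrite ed => <-.
by apply: eq_card => psi; rewrite inE.
Qed.

Lemma sum_bool_cards (T : finType) (P : pred T) :
  #|[set x | P x]| = \sum_(x : T) (P x : nat).
Proof. by rewrite sum_bool_card; apply: eq_card => x; rewrite inE. Qed.

Lemma main_nat (V : finType) (E : {set {set V}}) (d k : nat) (S : {set V}) :
  uniform_hg d.+1 E -> #|S| <= k ->
  #|edges_in E S| * d.+1`! <= d.+1 ^ d.+1 * MCDSH d.+1 E k.
Proof.
move=> unif Sk.
set D := d.+1; set M := MCDSH D E k; set n := #|V|.
have col (psi : {ffun V -> 'I_D}) : #|colorful_edges_in E S [ffun v => lift ord0 (psi v : 'I_D)]|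
    = \sum_(e in edges_in E S) (injon e psi : nat).
  rewrite /colorful_edges_in sum_bool_cards [RHS]big_mkcond /=.
  apply: eq_bigr => e _; rewrite [e \in edges_in E S]inE.
  have -> : [forall u in e, forall v in e, (u != v) ==>
     ([ffun v0 => lift ord0 (psi v0)] u != [ffun v0 => lift ord0 (psi v0)] v)]
     = injon e psi.
    rewrite /injon; apply: eq_forallb => u; congr (_ ==> _).
    apply: eq_forallb => v; congr (_ ==> _); congr (_ ==> _).
    by rewrite !ffunE (inj_eq lift_inj).
  by case: (e \in E); case: (e \subset S); case: (injon e psi).
have le (psi : {ffun V -> 'I_D}) : #|colorful_edges_in E S [ffun v => lift ord0 (psi v : 'I_D)]| <= M.
  rewrite /M /MCDSH.
  apply: leq_trans (leq_bigmax_cond (F := fun S => \max_(phi : {ffun V -> 'I_D.+1} | is_coloring S phi) #|colorful_edges_in E S phi|) _ Sk).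
  have hc : is_coloring S [ffun v => lift ord0 (psi v : 'I_D)].
    by apply/forallP => v; apply/implyP => _; rewrite ffunE lift0.
  exact: (leq_bigmax_cond (F := fun phi => #|colorful_edges_in E S phi|) _ hc).
have key : #|edges_in E S| * (D`! * D ^ (n - D)) <= D ^ n * M.
  have -> : #|edges_in E S| * (D`! * D ^ (n - D))
      = \sum_(psi : {ffun V -> 'I_D}) \sum_(e in edges_in E S) (injon e psi : nat).
    rewrite exchange_big /= -sum_nat_const; apply: eq_bigr => e.
    rewrite inE => /andP[eE _]; rewrite count_inj //; exact: unif.
  apply: (@leq_trans (\sum_(psi : {ffun V -> 'I_D}) M)).
    by apply: leq_sum => psi _; rewrite -col; apply: le.
  by rewrite sum_nat_const card_ffun card_ord.
have [-> //|] := posnP #|edges_in E S|.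
rewrite card_gt0 => /set0Pn [e]; rewrite inE => /andP[eE _].
have Dn : D <= n by have := max_card (mem e); rewrite (unif e eE).
move: key; rewrite -(subnKC Dn) expnD addKn.
rewrite mulnA (mulnAC (D ^ D)) leq_pmul2r ?expn_gt0 //.
Qed.

Unset Implicit Arguments.
Local Open Scope ring_scope.

Theorem mainTheorem17 (V : finType) (E : {set {set V}}) (d k : nat) :
  uniform_hg d E ->
  let p : rat := (d`!)%:R / (d ^ d)%:R in
  (DkSH E k)%:R <= (MCDSH d E k)%:R / p.
Proof.
case: d => [|d] unif; cbv zeta.
  rewrite fact0 expn0 divff ?oner_neq0 // divr1 ler_nat.
  rewrite /DkSH; apply/bigmax_leqP => S _.
  pose phi0 : {ffun V -> 'I_1} := [ffun _ => ord0].
  apply: (@leq_trans #|colorful_edges_in E set0 phi0|).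
    apply: subset_leq_card; apply/subsetP => x; rewrite !inE => /andP[xE _].
    have /eqP := unif x xE; rewrite cards_eq0 => /eqP x0; subst x.
    rewrite xE sub0set /=; apply/forallP => u; rewrite inE //.
  have h1 : (#|(set0 : {set V})| <= k)%N by rewrite cards0.
  rewrite /MCDSH.
  apply: leq_trans (leq_bigmax_cond (F := fun S => \max_(phi : {ffun V -> 'I_1} | is_coloring S phi) #|colorful_edges_in E S phi|) _ h1).
  have hc : is_coloring set0 phi0 by apply/forallP => v; rewrite inE.
  exact: (leq_bigmax_cond (F := fun phi => #|colorful_edges_in E set0 phi|) _ hc).
have [S0 HS0 ES0] := eq_bigmax_cond (fun S : {set V} => #|edges_in E S|)
   (A := [pred S : {set V} | (#|S| <= k)%N]) (ltac:(by apply/card_gt0P; exists set0; rewrite inE cards0)).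
have -> : DkSH E k = #|edges_in E S0| by exact: ES0.
rewrite invf_div mulrA ler_pdivlMr ?ltr0n ?fact_gt0 // -!natrM ler_nat.
by rewrite [X in (_ <= X)%N]mulnC; apply: main_nat unif HS0.
Qed.
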